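(* Let $d\ge 1$, $T\ge 1$, let $\mathcal{X}\subseteq\mathbb{R}^d$ be a non-empty closed convex set, and let $0<\mu\le L$. Let $f_1,\dots,f_T:\mathcal{X}\to[0,\infty)$ be differentiable with $\frac{\mu}{2}\|y-x\|^2\le f_t(y)-f_t(x)-\langle\nabla f_t(x),y-x\rangle\le\frac{L}{2}\|y-x\|^2$ for all $t$ and $x,y\in\mathcal{X}$. Let $x_1,\dots,x_T$ be the iterates of the OMGD algorithm with $K=\lceil\frac{L+\mu}{2\mu}\ln4\rceil$ from a starting point $x_0\in\mathcal{X}$. Then for any $\alpha>0$, $$\sum_{t=1}^T f_t(x_t)\le\sum_{t=1}^T f_t(x_t^\star)+\frac{1}{2\alpha}\sum_{t=1}^T\|\nabla f_t(x_t^\star)\|^2+(L+\alpha)\big(\|x_1-x_1^\star\|^2+2\mathcal{P}_{2,T}^\star\big).$$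
   Context: $x_t^\star=\arg\min_{x\in\mathcal{X}}f_t(x)$ and $\mathcal{P}_{2,T}^\star=\sum_{t=2}^T\|x_t^\star-x_{t-1}^\star\|^2$. OMGD with parameter $K$: $x_1=x_0$; for $t=2,\dots,T$, $z_t^{(0)}=x_{t-1}$, $z_t^{(k)}=\Pi_{\mathcal{X}}\big(z_t^{(k-1)}-\frac1L\nabla f_{t-1}(z_t^{(k-1)})\big)$ ($k=1,\dots,K$), $x_t=z_t^{(K)}$, where $\Pi_{\mathcal{X}}$ is Euclidean projection onto $\mathcal{X}$. *)

(* Defs.v *)
From HB Require Import structures.
From mathcomp Require Import all_boot all_order all_algebra.
From mathcomp Require Import all_classical all_reals all_analysis.
Set Implicit Arguments. Unset Strict Implicit. Unset Printing Implicit Defensive.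
Import Order.TTheory GRing.Theory Num.Theory.
Import numFieldNormedType.Exports.
Local Open Scope classical_set_scope.
Local Open Scope ring_scope.

Definition dotp (R : realType) (d : nat) (u v : 'rV[R]_d) : R :=
  \sum_(i < d) u ord0 i * v ord0 i.
Definition sqnorm (R : realType) (d : nat) (u : 'rV[R]_d) : R := dotp u u.

Definition is_gradient (R : realType) (d : nat) (f : 'rV[R]_d -> R)
  (x g : 'rV[R]_d) : Prop :=
  differentiable f x /\ forall h, 'd f x h = dotp g h.

Definition is_proj (R : realType) (d : nat) (X : set 'rV[R]_d)
  (p : 'rV[R]_d -> 'rV[R]_d) : Prop :=
  forall y, X (p y) /\ forall z, X z -> sqnorm (y - p y) <= sqnorm (y - z).

Definition is_argmin (R : realType) (d : nat) (X : set 'rV[R]_d)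
  (f : 'rV[R]_d -> R) (x : 'rV[R]_d) : Prop :=
  X x /\ forall y, X y -> f x <= f y.

(* OMGD iterates, indexed by t : nat; omgd ... 1 = x_1 = x0, and for t >= 2,
   x_t = z_t^(K) with z_t^(k) = proj (z_t^(k-1) - (1/L) grad f_{t-1} (z_t^(k-1))).
   (omgd ... 0 is set to x0 as well; it is never used.)
   grad s z is the gradient of f_s at z. *)
Fixpoint omgd (R : realType) (d : nat) (proj : 'rV[R]_d -> 'rV[R]_d)
  (grad : nat -> 'rV[R]_d -> 'rV[R]_d) (L : R) (K : nat) (x0 : 'rV[R]_d)
  (t : nat) : 'rV[R]_d :=
  match t with
  | 0 => x0
  | 1 => x0
  | (s.+1) as t' =>
      iter K (fun z => proj (z - L^-1 *: grad s z)) (omgd proj grad L K x0 s)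
  end.

(* Main.v *)
Require Import Defs.
From HB Require Import structures.
From mathcomp Require Import all_boot all_order all_algebra.
From mathcomp Require Import all_classical all_reals all_analysis.
From mathcomp Require Import ring lra.
Import Order.TTheory GRing.Theory Num.Theory.
Import numFieldNormedType.Exports.
Local Open Scope classical_set_scope.
Local Open Scope ring_scope.
Set Implicit Arguments. Unset Strict Implicit.



Section H0.
Variables (R : realType) (d : nat).
Implicit Types (u v w : 'rV[R]_d).

Lemma convX (X : set 'rV[R]_d) x y (s : R) : convex_set X -> X x -> X y ->
  0 <= s -> s <= 1 -> X (s *: x + (1 - s) *: y).
Proof.
move=> cX Xx Xy s0 s1.
have := cX x y (Itv01 s0 s1).
rewrite !inE => /(_ Xx Xy).
by [].
Qed.

Lemma dotpC u v : dotp u v = dotp v u.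
Proof. by apply: eq_bigr => i _; rewrite mulrC. Qed.
Lemma dotpDl u v w : dotp (u + v) w = dotp u w + dotp v w.
Proof. by rewrite /dotp -big_split; apply: eq_bigr => i _; rewrite mxE mulrDl. Qed.
Lemma dotpNl u v : dotp (- u) v = - dotp u v.
Proof. by rewrite /dotp -sumrN; apply: eq_bigr => i _; rewrite mxE mulNr. Qed.
Lemma dotpZl a u v : dotp (a *: u) v = a * dotp u v.
Proof. by rewrite /dotp mulr_sumr; apply: eq_bigr => i _; rewrite mxE mulrA. Qed.
Lemma dotpBl u v w : dotp (u - v) w = dotp u w - dotp v w.
Proof. by rewrite dotpDl dotpNl. Qed.
Lemma dotpDr u v w : dotp w (u + v) = dotp w u + dotp w v.
Proof. by rewrite dotpC dotpDl !(dotpC w). Qed.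
Lemma dotpNr u v : dotp v (- u) = - dotp v u.
Proof. by rewrite dotpC dotpNl dotpC. Qed.
Lemma dotpZr a u v : dotp v (a *: u) = a * dotp v u.
Proof. by rewrite dotpC dotpZl dotpC. Qed.
Lemma dotpBr u v w : dotp w (u - v) = dotp w u - dotp w v.
Proof. by rewrite dotpDr dotpNr. Qed.
Lemma sqnorm_ge0 u : 0 <= sqnorm u.
Proof. by apply: sumr_ge0 => i _; rewrite -expr2 sqr_ge0. Qed.
End H0.



Section H1.
Variables (R : realType) (d : nat).
Implicit Types (u v w : 'rV[R]_d).

Lemma sqnormN u : sqnorm (- u) = sqnorm u.
Proof. by rewrite /sqnorm dotpNl dotpNr opprK. Qed.

Lemma sqnormB u v : sqnorm (u - v) = sqnorm u - 2 * dotp u v + sqnorm v.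
Proof. rewrite /sqnorm dotpBl !dotpBr (dotpC v u). lra. Qed.

Lemma sqnormD u v : sqnorm (u + v) = sqnorm u + 2 * dotp u v + sqnorm v.
Proof. rewrite /sqnorm dotpDl !dotpDr (dotpC v u). lra. Qed.

Lemma sqnormD2 u v : sqnorm (u + v) <= 2 * sqnorm u + 2 * sqnorm v.
Proof.
have := sqnorm_ge0 (u - v). rewrite sqnormB sqnormD. lra.
Qed.

Lemma proj_vi (X : set 'rV[R]_d) proj y z : convex_set X -> is_proj X proj -> X z ->
  dotp (y - proj y) (z - proj y) <= 0.
Proof.
move=> cX hP Xz; have [XP hmin] := hP y.
set q := proj y in XP hmin *.
set a := dotp (y - q) (z - q); set b := sqnorm (z - q).
have b0 : 0 <= b by apply: sqnorm_ge0.
rewrite leNgt; apply/negP => a0.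
set s := a / (a + b).
have s0 : 0 <= s by rewrite /s divr_ge0 // ?addr_ge0 // ltW.
have s1 : s <= 1 by rewrite /s ler_pdivrMr ?mul1r ?lerDl // ltr_wpDr.
have := hmin _ (convX cX Xz XP s0 s1).
have -> : y - (s *: z + (1 - s) *: q) = (y - q) - s *: (z - q).
  by apply/matrixP => i j; rewrite !mxE; ring.
rewrite [sqnorm (_ - s *: _)]sqnormB dotpZr /sqnorm dotpZl dotpZr -/(sqnorm (z - q)) -/b -/a.
have hs : s * (a + b) = a by rewrite /s mulfVK // gt_eqF // ltr_wpDr.
nra.
Qed.
End H1.



Section H2.
Variables (R : realType) (d : nat).
Implicit Types (u v w : 'rV[R]_d).

Definition sm (X : set 'rV[R]_d) (mu L : R) (f : 'rV[R]_d -> R) (g : 'rV[R]_d -> 'rV[R]_d) :=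
  forall x y, X x -> X y ->
     mu / 2 * sqnorm (y - x) <= f y - f x - dotp (g x) (y - x) /\
     f y - f x - dotp (g x) (y - x) <= L / 2 * sqnorm (y - x).

Lemma argmin_opt X mu L f g xs w : convex_set X -> 0 <= L -> sm X mu L f g ->
  is_argmin X f xs -> X w -> 0 <= dotp (g xs) (w - xs).
Proof.
move=> cX L0 hs [Xxs hmin] Xw.
set a := dotp (g xs) (w - xs); set b := sqnorm (w - xs).
have b0 : 0 <= b by apply: sqnorm_ge0.
rewrite leNgt; apply/negP => a0.
have pos : 0 < - a + L * b by rewrite ltr_wpDr ?mulr_ge0 // oppr_gt0.
set s := - a / (- a + L * b).
have s0 : 0 <= s by rewrite /s divr_ge0 // ?oppr_ge0 ?ltW.
have s1 : s <= 1 by rewrite /s ler_pdivrMr ?mul1r // lerDl mulr_ge0.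
have Xy := convX cX Xw Xxs s0 s1.
have [_ hup] := hs _ _ Xxs Xy.
have hm := hmin _ Xy.
have e : s *: w + (1 - s) *: xs - xs = s *: (w - xs)
  by apply/matrixP => i j; rewrite !mxE; ring.
move: hup; rewrite e; rewrite dotpZr /sqnorm dotpZl dotpZr -/(sqnorm (w - xs)) -/a -/b => hup.
have hsd : s * (- a + L * b) = - a by rewrite /s mulfVK // gt_eqF.
have sp : 0 < s by rewrite /s divr_gt0 // oppr_gt0.
nra.
Qed.

Lemma step_contract X mu L f g proj xs z : convex_set X -> 0 < mu -> mu <= L ->
  is_proj X proj -> sm X mu L f g -> is_argmin X f xs -> X z ->
  (L + mu) * sqnorm (proj (z - L^-1 *: g z) - xs) <= (L - mu) * sqnorm (z - xs).
Proof.
move=> cX mu0 muL hP hs hxs Xz.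
have L0 : 0 < L by apply: lt_le_trans muL.
have Xxs := hxs.1.
set zp := proj (z - L^-1 *: g z).
have Xzp : X zp by have [] := hP (z - L^-1 *: g z).
have hD := proj_vi (z - L^-1 *: g z) cX hP Xxs.
rewrite -/zp in hD.
have hE := argmin_opt cX (ltW L0) hs hxs Xzp.
have [hA _] := hs _ _ Xz Xxs.
have [hB _] := hs _ _ Xxs Xzp.
have [_ hC] := hs _ _ Xz Xzp.
set u := z - xs; set p := zp - xs.
have e1 : xs - z = - u by rewrite /u opprB.
have e2 : zp - z = p - u by apply/matrixP => i j; rewrite !mxE; ring.
have e3 : z - L^-1 *: g z - zp = (u - p) - L^-1 *: g z by apply/matrixP => i j; rewrite !mxE; ring.
have e4 : xs - zp = - p by rewrite /p opprB.
move: hA hB hC hD hE; rewrite e1 e2 e3 e4 -/p -/u.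
clearbody u p.
rewrite ?sqnormN ?sqnormB ?dotpNr ?dotpBr ?dotpBl ?dotpZl ?dotpNr ?dotpNl.
set g1u := dotp (g z) u; set g1p := dotp (g z) p; set g0p := dotp (g xs) p.
set w := L^-1 * g1p.
have hw : g1p = L * w by rewrite /w mulrA mulfV ?mul1r // gt_eqF.
rewrite /sqnorm (dotpC p u).
set uu := dotp u u; set pp := dotp p p; set up := dotp u p.
move=> hA hB hC hD hE.
have hD' : L * pp <= L * up - g1p.
  rewrite hw; have := ler_wpM2l (ltW L0) hD; lra.
nra.
Qed.
End H2.



Section H3.
Variables (R : realType) (d : nat).

Lemma iter_in (X : set 'rV[R]_d) proj (G : 'rV[R]_d -> 'rV[R]_d) k y :
  is_proj X proj -> X y -> X (iter k (fun z => proj (G z)) y).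
Proof. by move=> hP Xy; case: k => [|k] //=; by have [] := hP (G (iter k (fun z => proj (G z)) y)). Qed.

Lemma iter_contract (X : set 'rV[R]_d) mu L f g proj xs k y : convex_set X -> 0 < mu -> mu <= L ->
  is_proj X proj -> sm X mu L f g -> is_argmin X f xs -> X y ->
  sqnorm (iter k (fun z => proj (z - L^-1 *: g z)) y - xs)
    <= ((L - mu) / (L + mu)) ^+ k * sqnorm (y - xs).
Proof.
move=> cX mu0 muL hP hs hxs Xy.
have Lm : 0 < L + mu by apply: addr_gt0 => //; apply: lt_le_trans muL.
have c0 : 0 <= (L - mu) / (L + mu) by rewrite divr_ge0 ?subr_ge0 // ltW.
elim: k => [|k IH]; first by rewrite expr0 mul1r.
rewrite iterS exprS -mulrA.
have Xi := @iter_in X proj (fun z => z - L^-1 *: g z) k y hP Xy.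
have := step_contract cX mu0 muL hP hs hxs Xi.
set a := sqnorm _; set b := sqnorm (iter k _ y - xs) => h.
apply: (le_trans (y := (L - mu) / (L + mu) * b)); last by rewrite ler_wpM2l.
by rewrite mulrAC ler_pdivlMr // mulrC.
Qed.

Lemma powK (mu L : R) (K : nat) : 0 < mu -> mu <= L ->
  K = `|Num.ceil ((L + mu) / (2 * mu) * ln 4)|%N ->
  ((L - mu) / (L + mu)) ^+ K <= 4^-1.
Proof.
move=> mu0 muL ->.
have Lm : 0 < L + mu by apply: addr_gt0 => //; apply: lt_le_trans muL.
set c := (L - mu) / (L + mu).
have c0 : 0 <= c by rewrite divr_ge0 ?subr_ge0 // ltW.
set r := (L + mu) / (2 * mu) * ln 4.
have ln4 : 0 < ln (4 : R) by rewrite ln_gt0 // ltr1n.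
have r0 : 0 < r by rewrite /r mulr_gt0 // divr_gt0 // mulr_gt0.
have Kr : r <= (`|Num.ceil r|%N)%:R.
  rewrite natr_absz ger0_norm ?ceil_ge //.
  by rewrite ceil_ge0 (lt_trans _ r0) // ltrN10.
set K' := `|Num.ceil r|%N in Kr *.
have hc : c <= expR (c - 1) by have := expR_ge1Dx (c - 1); rewrite addrC subrK.
apply: (le_trans (y := expR (c - 1) ^+ K')); first by rewrite lerXn2r // ?nnegrE // (le_trans c0).
rewrite -expRM_natl.
have e : c - 1 = - (2 * mu / (L + mu)).
  rewrite /c; field; by rewrite gt_eqF.
have hK : ln 4 <= K'%:R * (2 * mu / (L + mu)).
  move: Kr; rewrite /r => Kr.
  have t : (L + mu) / (2 * mu) * ln 4 * (2 * mu / (L + mu)) = ln 4.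
    by field; rewrite !gt_eqF // mulr_gt0.
  rewrite -{1}t; apply: ler_wpM2r => //; apply: divr_ge0; first by rewrite mulr_ge0 // ltW.
  by rewrite ltW.
rewrite e mulrN.
apply: (le_trans (y := expR (- ln 4))); first by rewrite ler_expR lerN2.
by rewrite expRN lnK // posrE.
Qed.
End H3.

Unset Implicit Arguments.


Lemma young (R : realType) (d : nat) (alpha : R) (g v : 'rV[R]_d) : 0 < alpha ->
  dotp g v <= (2 * alpha)^-1 * sqnorm g + alpha / 2 * sqnorm v.
Proof.
move=> a0; have := sqnorm_ge0 (g - alpha *: v).
rewrite sqnormB dotpZr /sqnorm dotpZl dotpZr.
set gg := dotp g g; set gv := dotp g v; set vv := dotp v v.
set q := (2 * alpha)^-1 * gg.
have hq : gg = 2 * alpha * q by rewrite /q mulrA mulfV ?mul1r // gt_eqF // mulr_gt0.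
move=> h; nra.
Qed.

Theorem lemma2 (R : realType) (d T : nat) (X : set 'rV[R]_d) (mu L : R)
  (f : nat -> 'rV[R]_d -> R) (grad : nat -> 'rV[R]_d -> 'rV[R]_d)
  (proj : 'rV[R]_d -> 'rV[R]_d) (xstar : nat -> 'rV[R]_d) (x0 : 'rV[R]_d)
  (K : nat) :
  (1 <= d)%N -> (1 <= T)%N ->
  X !=set0 -> closed X -> convex_set X ->
  0 < mu -> mu <= L ->
  (forall t, (1 <= t <= T)%N -> forall x, X x -> 0 <= f t x) ->
  (forall t, (1 <= t <= T)%N -> forall x, X x -> is_gradient (f t) x (grad t x)) ->
  (forall t, (1 <= t <= T)%N -> forall x y, X x -> X y ->
     mu / 2 * sqnorm (y - x) <= f t y - f t x - dotp (grad t x) (y - x) /\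
     f t y - f t x - dotp (grad t x) (y - x) <= L / 2 * sqnorm (y - x)) ->
  (forall t, (1 <= t <= T)%N -> is_argmin X (f t) (xstar t)) ->
  is_proj X proj ->
  X x0 ->
  K = `|Num.ceil ((L + mu) / (2 * mu) * ln 4)|%N ->
  forall alpha : R, 0 < alpha ->
  let x := omgd proj grad L K x0 in
  \sum_(1 <= t < T.+1) f t (x t) <=
    \sum_(1 <= t < T.+1) f t (xstar t)
    + (2 * alpha)^-1 * \sum_(1 <= t < T.+1) sqnorm (grad t (xstar t))
    + (L + alpha) * (sqnorm (x 1%N - xstar 1%N)
        + 2 * \sum_(2 <= t < T.+1) sqnorm (xstar t - xstar t.-1)).
Proof.
move=> d1 T1 _ _ cX mu0 muL _ _ hsm hxs hP Xx0 hK alpha a0.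
cbv zeta; set x := omgd proj grad L K x0.
have L0 : 0 < L by apply: lt_le_trans muL.
have xS : forall t, x t.+2 = iter K (fun z => proj (z - L^-1 *: grad t.+1 z)) (x t.+1).
  by [].
have Xx : forall t, X (x t).
  elim=> [|[|t] IH] //; rewrite xS.
  case: (K) => [|k] //=.
  by case: (hP (iter k (fun z => proj (z - L^-1 *: grad t.+1 z)) (x t.+1) - L^-1 *: grad t.+1 (iter k (fun z => proj (z - L^-1 *: grad t.+1 z)) (x t.+1)))).
have c4 : forall t, (2 <= t <= T)%N ->
    sqnorm (x t - xstar t.-1) <= 4^-1 * sqnorm (x t.-1 - xstar t.-1).
  case=> [|[|t]] // ht.
  have ht1 : (1 <= t.+1 <= T)%N by move: ht => /andP[_ h]; rewrite /= ltnW.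
  have := @iter_contract R d X mu L (f t.+1) (grad t.+1) proj (xstar t.+1) K (x t.+1)
     cX mu0 muL hP (hsm _ ht1) (hxs _ ht1) (Xx _).
  rewrite xS => h; apply: le_trans h _; apply: ler_wpM2r; first exact: sqnorm_ge0.
  exact: powK.
set a := fun t => sqnorm (x t - xstar t).
set del := fun t => sqnorm (xstar t - xstar t.-1).
have rec : forall t, (2 <= t <= T)%N -> a t <= 2^-1 * a t.-1 + 2 * del t.
  move=> t ht; rewrite /a /del.
  have -> : x t - xstar t = (x t - xstar t.-1) + (xstar t.-1 - xstar t)
    by apply/matrixP => i j; rewrite !mxE; ring.
  apply: le_trans (sqnormD2 _ _) _.
  rewrite -[sqnorm (xstar t.-1 - xstar t)]sqnormN opprB.
  have := c4 t ht; lra.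
have a0' : forall t, 0 <= a t by move=> t; apply: sqnorm_ge0.
have Sbound : \sum_(1 <= t < T.+1) a t <= 2 * a 1%N + 4 * \sum_(2 <= t < T.+1) del t.
  rewrite big_ltn //.
  have h1 : \sum_(2 <= t < T.+1) a t <= \sum_(2 <= t < T.+1) (2^-1 * a t.-1 + 2 * del t).
    apply: ler_sum_nat => t ht; apply: rec; by rewrite ltnS in ht.
  rewrite big_split /= -!mulr_sumr in h1.
  have h2 : \sum_(2 <= t < T.+1) a t.-1 = \sum_(1 <= t < T) a t.
    by rewrite big_add1.
  have h3 : \sum_(1 <= t < T) a t <= a 1%N + \sum_(2 <= t < T.+1) a t.
    by rewrite -big_ltn // [X in _ <= X]big_nat_recr //= lerDl.
  rewrite h2 in h1.
  lra.
have round : forall t, (1 <= t <= T)%N ->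
    f t (x t) <= f t (xstar t) + (2 * alpha)^-1 * sqnorm (grad t (xstar t)) + (L + alpha) / 2 * a t.
  move=> t ht; have [_ hup] := hsm t ht _ _ (hxs t ht).1 (Xx t).
  have := @young _ _ alpha (grad t (xstar t)) (x t - xstar t) a0.
  rewrite /a /=; lra.
have hsum : \sum_(1 <= t < T.+1) f t (x t) <= \sum_(1 <= t < T.+1)
    (f t (xstar t) + (2 * alpha)^-1 * sqnorm (grad t (xstar t)) + (L + alpha) / 2 * a t).
  apply: ler_sum_nat => t ht; apply: round; by rewrite ltnS in ht.
rewrite !big_split /= -!mulr_sumr in hsum.
apply: le_trans hsum _.
have hL : 0 <= (L + alpha) / 2 by apply: divr_ge0 => //; apply: addr_ge0; apply: ltW.
have := ler_wpM2l hL Sbound.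
rewrite -/(a 1%N) -/del.
lra.
Qed.
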